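(* Let $F$ be a field of characteristic $\neq 2$ and let $O$ be a Cayley algebra over $F$ which is a division algebra (i.e. has no zero divisors). Let $V=\operatorname{im}(O)$ and let $$\mathfrak{B}=\{\operatorname{im}(H)\colon H \text{ is a 4-dimensional associative subalgebra of } O\}.$$ Then $\dim V=7$, $\dim B=3$ for every $B\in\mathfrak{B}$, and every two-dimensional subspace $U\subseteq V$ is contained in exactly one element $B\in\mathfrak{B}$. In particular $(V,\mathfrak{B})$ is a $2$-$(7,3,1)$ subspace design ($q$-Fano plane) over $F$.
   Context: All algebras are finite-dimensional $F$-vector spaces with a bilinear (not necessarily associative) multiplication and a unit $1$; subalgebras contain $1$. An involution of an algebra $A$ is a linear map $a\mapsto a^*$ with $(ab)^*=b^*a^*$ and $(a^* )^*=a$. Cayley–Dickson algebras are defined inductively: $F$ with the identity involution is one; if $A$ is a Cayley–Dickson algebra with involution $*$ and $\gamma\in F^\times$, the Dickson double $D_\gamma(A)$ is the vector space $A\oplus A$, whose elements are written $a+ib$ ($a,b\in A$), with multiplication $(a+ib)(c+id)=(ac+\gamma\, d b^* )+i(a^*d+cb)$ and involution $(a+ib)^*=a^*-ib$; it is again a Cayley–Dickson algebra. A Cayley algebra is an 8-dimensional Cayley–Dickson algebra, i.e. $D_\gamma(D_\beta(D_\alpha(F)))$ with $\alpha,\beta,\gamma\in F^\times$. For a Cayley–Dickson algebra (or a subalgebra $H$ of one), $\operatorname{im}(H)=\{a\in H: a^*=-a\}$ (the imaginary elements); one has $O=F1\oplus\operatorname{im}(O)$. A $2$-$(v,k,1)$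 subspace design on a $v$-dimensional space $V$ is a set of $k$-dimensional subspaces such that every 2-dimensional subspace of $V$ lies in exactly one of them. *)

(* Defs.v *)
From HB Require Import structures.
From mathcomp Require Import all_boot all_order all_algebra.
Set Implicit Arguments. Unset Strict Implicit. Unset Printing Implicit Defensive.
Import GRing.Theory.
Local Open Scope ring_scope.

(* Cayley--Dickson construction.  An element a + i b of the Dickson double
   D_g(A) is represented by the pair (a, b) : A * A. *)
Section CayleyDickson.
Variable F : fieldType.

(* (a+ib)(c+id) = (ac + g d b^* ) + i (a^* d + c b) *)
Definition dmul (A : lmodType F) (mulA : A -> A -> A) (cjA : A -> A) (g : F)
    (x y : A * A) : A * A :=
  (mulA x.1 y.1 + g *: mulA y.2 (cjA x.2), mulA (cjA x.1) y.2 + mulA y.1 x.2).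
Definition dconj (A : lmodType F) (cjA : A -> A) (x : A * A) : A * A :=
  (cjA x.1, - x.2).
Definition done_ (A : lmodType F) (oneA : A) : A * A := (oneA, 0).

Definition C0 := (F^o : vectType F).
Definition C1 := (C0 * C0)%type.
Definition C2 := (C1 * C1)%type.
(* the Cayley algebra O = D_gamma(D_beta(D_alpha(F))) as an F-vector space *)
Definition Cayley := (C2 * C2)%type.

Definition mul0 (x y : C0) : C0 := (x : F) * y.
Definition conj0 (x : C0) : C0 := x.
Definition one0 : C0 := (1 : F).

Variables alpha beta gamma : F.

Definition mul1 : C1 -> C1 -> C1 := @dmul C0 mul0 conj0 alpha.
Definition conj1 : C1 -> C1 := @dconj C0 conj0.
Definition one1 : C1 := @done_ C0 one0.
Definition mul2 : C2 -> C2 -> C2 := @dmul C1 mul1 conj1 beta.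
Definition conj2 : C2 -> C2 := @dconj C1 conj1.
Definition one2 : C2 := @done_ C1 one1.

Definition omul : Cayley -> Cayley -> Cayley := @dmul C2 mul2 conj2 gamma.
Definition oconj : Cayley -> Cayley := @dconj C2 conj2.
Definition oone : Cayley := @done_ C2 one2.

Definition cayley_division : Prop :=
  forall x y : Cayley, omul x y = 0 -> x = 0 \/ y = 0.

Definition is_subalgebra (H : {vspace Cayley}) : Prop :=
  oone \in H /\ (forall x y, x \in H -> y \in H -> omul x y \in H).

Definition is_assoc (H : {vspace Cayley}) : Prop :=
  forall x y z, x \in H -> y \in H -> z \in H ->
    omul (omul x y) z = omul x (omul y z).

Definition is_im (H B : {vspace Cayley}) : Prop :=
  forall v, (v \in B) = (v \in H) && (oconj v == - v).

Definition in_frakB (B : {vspace Cayley}) : Prop :=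
  exists H : {vspace Cayley},
    [/\ is_subalgebra H, is_assoc H, \dim H = 4%N & is_im H B].

End CayleyDickson.

(* Main.v *)
Require Import Defs.
From HB Require Import structures.
From mathcomp Require Import all_boot all_order all_algebra.
From mathcomp Require Import ring zify.
Import GRing.Theory.
Local Open Scope ring_scope.
Set Implicit Arguments. Unset Strict Implicit. Unset Printing Implicit Defensive.
Section Coords.
Variable F : fieldType.
Variables alpha beta gamma : F.
Local Notation O := (Cayley F).
Local Notation om := (omul alpha beta gamma).
Local Notation one := (oone F).
Definition mk_def (a0 a1 a2 a3 a4 a5 a6 a7 : F) : O := (((a0,a1),(a2,a3)),((a4,a5),(a6,a7))).
Definition mk := locked mk_def.
Lemma mkE : mk = mk_def. Proof. by rewrite /mk -lock. Qed.
Lemma omulE a0 a1 a2 a3 a4 a5 a6 a7 b0 b1 b2 b3 b4 b5 b6 b7 :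
  om (mk a0 a1 a2 a3 a4 a5 a6 a7) (mk b0 b1 b2 b3 b4 b5 b6 b7) =
  mk (a0 * b0 + alpha * (b1 * a1) + beta * (b2 * a2 + alpha * (- a3 * b3)) + gamma * (b4 * a4 + alpha * (- a5 * b5) + beta * (- a6 * b6 + alpha * (- b7 * - a7))))
   (a0 * b1 + b0 * a1 + beta * (b2 * - a3 + a2 * b3) + gamma * (b4 * - a5 + a4 * b5 + beta * (- a6 * - b7 + b6 * - a7)))
   (a0 * b2 + alpha * (b3 * - a1) + (b0 * a2 + alpha * (a3 * b1)) + gamma * (b4 * - a6 + alpha * (- a7 * - b5) + (a4 * b6 + alpha * (b7 * - a5))))
   (a0 * b3 + b2 * - a1 + (b0 * a3 + a2 * b1) + gamma * (b4 * - a7 + - a6 * - b5 + (a4 * b7 + b6 * - a5)))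
   (a0 * b4 + alpha * (b5 * - a1) + beta * (b6 * - a2 + alpha * (- - a3 * b7)) + (b0 * a4 + alpha * (a5 * b1) + beta * (a6 * b2 + alpha * (- b3 * a7))))
   (a0 * b5 + b4 * - a1 + beta * (b6 * - - a3 + - a2 * b7) + (b0 * a5 + a4 * b1 + beta * (a6 * - b3 + b2 * a7)))
   (a0 * b6 + alpha * (b7 * - - a1) + (b4 * - a2 + alpha * (- a3 * b5)) + (b0 * a6 + alpha * (a7 * - b1) + (a4 * b2 + alpha * (b3 * a5))))
   (a0 * b7 + b6 * - - a1 + (b4 * - a3 + - a2 * b5) + (b0 * a7 + a6 * - b1 + (a4 * b3 + b2 * a5))).
Proof. by rewrite mkE. Qed.
Lemma addE a0 a1 a2 a3 a4 a5 a6 a7 b0 b1 b2 b3 b4 b5 b6 b7 :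
  mk a0 a1 a2 a3 a4 a5 a6 a7 + mk b0 b1 b2 b3 b4 b5 b6 b7 =
  mk (a0+b0) (a1+b1) (a2+b2) (a3+b3) (a4+b4) (a5+b5) (a6+b6) (a7+b7).
Proof. by rewrite mkE. Qed.
Lemma oppE a0 a1 a2 a3 a4 a5 a6 a7 :
  - mk a0 a1 a2 a3 a4 a5 a6 a7 = mk (-a0) (-a1) (-a2) (-a3) (-a4) (-a5) (-a6) (-a7).
Proof. by rewrite mkE. Qed.
Lemma scaleE k a0 a1 a2 a3 a4 a5 a6 a7 :
  k *: mk a0 a1 a2 a3 a4 a5 a6 a7 = mk (k*a0) (k*a1) (k*a2) (k*a3) (k*a4) (k*a5) (k*a6) (k*a7).
Proof. by rewrite mkE. Qed.
Lemma zeroE : (0 : O) = mk 0 0 0 0 0 0 0 0. Proof. by rewrite mkE. Qed.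
Lemma oneE : one = mk 1 0 0 0 0 0 0 0. Proof. by rewrite mkE. Qed.
Lemma conjE a0 a1 a2 a3 a4 a5 a6 a7 :
  oconj (mk a0 a1 a2 a3 a4 a5 a6 a7) = mk a0 (-a1) (-a2) (-a3) (-a4) (-a5) (-a6) (-a7).
Proof. by rewrite mkE. Qed.
Lemma mkK (x : O) : x = mk x.1.1.1 x.1.1.2 x.1.2.1 x.1.2.2 x.2.1.1 x.2.1.2 x.2.2.1 x.2.2.2.
Proof. by rewrite mkE; case: x => [[[? ?] [? ?]] [[? ?] [? ?]]]. Qed.
Lemma mk_eq a0 a1 a2 a3 a4 a5 a6 a7 b0 b1 b2 b3 b4 b5 b6 b7 :
  a0 = b0 -> a1 = b1 -> a2 = b2 -> a3 = b3 -> a4 = b4 -> a5 = b5 -> a6 = b6 -> a7 = b7 ->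
  mk a0 a1 a2 a3 a4 a5 a6 a7 = mk b0 b1 b2 b3 b4 b5 b6 b7.
Proof. by move=> -> -> -> -> -> -> -> ->. Qed.
Definition c0 (x : O) : F := x.1.1.1.
Lemma c0E a0 a1 a2 a3 a4 a5 a6 a7 : c0 (mk a0 a1 a2 a3 a4 a5 a6 a7) = a0.
Proof. by rewrite mkE. Qed.
Ltac dest x := rewrite [x]mkK; move: (x.1.1.1) (x.1.1.2) (x.1.2.1) (x.1.2.2) (x.2.1.1) (x.2.1.2) (x.2.2.1) (x.2.2.2) => ? ? ? ? ? ? ? ?.
Ltac crunch := rewrite ?zeroE ?oneE; rewrite !(omulE, addE, oppE, scaleE, conjE); rewrite ?c0E; apply: mk_eq; ring.
Definition A (x y z : O) := om (om x y) z - om x (om y z).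

Lemma omulDl (x y z : O) : om (x + y) z = om x z + om y z.
Proof. dest x; dest y; dest z; crunch. Qed.
Lemma omulDr (x y z : O) : om z (x + y) = om z x + om z y.
Proof. dest x; dest y; dest z; crunch. Qed.
Lemma omulZl k (x z : O) : om (k *: x) z = k *: om x z.
Proof. dest x; dest z; crunch. Qed.
Lemma omulZr k (x z : O) : om z (k *: x) = k *: om z x.
Proof. dest x; dest z; crunch. Qed.
Lemma om1l (x : O) : om one x = x.
Proof. dest x; crunch. Qed.
Lemma om1r (x : O) : om x one = x.
Proof. dest x; crunch. Qed.
Lemma leftalt (x y : O) : om x (om x y) = om (om x x) y.
Proof. dest x; dest y; crunch. Qed.
Lemma rightalt (x y : O) : om (om y x) x = om y (om x x).
Proof. dest x; dest y; crunch. Qed.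
Lemma flex (x y : O) : om (om x y) x = om x (om y x).
Proof. dest x; dest y; crunch. Qed.
Lemma as1 (x y : O) : A x y (om x y) = 0.
Proof. rewrite /A; dest x; dest y; crunch. Qed.
Lemma as2 (x y : O) : A y x (om x y) = 0.
Proof. rewrite /A; dest x; dest y; crunch. Qed.
Lemma as3 (x y : O) : A x (om x y) y = 0.
Proof. rewrite /A; dest x; dest y; crunch. Qed.
Lemma as4 (x y : O) : A y (om x y) x = 0.
Proof. rewrite /A; dest x; dest y; crunch. Qed.
Lemma as5 (x y : O) : A (om x y) x y = 0.
Proof. rewrite /A; dest x; dest y; crunch. Qed.
Lemma as6 (x y : O) : A (om x y) y x = 0.
Proof. rewrite /A; dest x; dest y; crunch. Qed.
Lemma Alin1 k (x x' y z : O) : A (k *: x + x') y z = k *: A x y z + A x' y z.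
Proof. rewrite /A; dest x; dest x'; dest y; dest z; crunch. Qed.
Lemma Alin2 k (x x' y z : O) : A y (k *: x + x') z = k *: A y x z + A y x' z.
Proof. rewrite /A; dest x; dest x'; dest y; dest z; crunch. Qed.
Lemma Alin3 k (x x' y z : O) : A y z (k *: x + x') = k *: A y z x + A y z x'.
Proof. rewrite /A; dest x; dest x'; dest y; dest z; crunch. Qed.
Lemma quad (x : O) : om x x = (c0 x + c0 x) *: x + (c0 (om x x) - (c0 x + c0 x) * c0 x) *: one.
Proof. dest x; crunch. Qed.
Lemma imsq (u : O) : c0 u = 0 -> om u u = c0 (om u u) *: one.
Proof. dest u; rewrite c0E => H; subst; crunch. Qed.
Lemma anti (u v : O) : c0 u = 0 -> c0 v = 0 -> om v u = c0 (om u v + om v u) *: one - om u v.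
Proof. dest u; dest v; rewrite !c0E => H1 H2; subst; crunch. Qed.
Lemma uw (u v : O) : c0 u = 0 -> om u (om u v) = c0 (om u u) *: v.
Proof. dest u; dest v; rewrite !c0E => H1; subst; crunch. Qed.
Lemma wv (u v : O) : c0 v = 0 -> om (om u v) v = c0 (om v v) *: u.
Proof. dest u; dest v; rewrite !c0E => H1; subst; crunch. Qed.
Lemma vw (u v : O) : c0 u = 0 -> c0 v = 0 -> om v (om u v) = c0 (om u v + om v u) *: v - c0 (om v v) *: u.
Proof. dest u; dest v; rewrite !c0E => H1 H2; subst; crunch. Qed.
Lemma wu (u v : O) : c0 u = 0 -> c0 v = 0 -> om (om u v) u = c0 (om u v + om v u) *: u - c0 (om u u) *: v.
Proof. dest u; dest v; rewrite !c0E => H1 H2; subst; crunch. Qed.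
Lemma sqdiff c (u : O) : om (c *: one - u) (c *: one + u) = (c ^+ 2) *: one - om u u.
Proof. dest u; crunch. Qed.
Lemma conj_im (u : O) : c0 u = 0 -> oconj u = - u.
Proof. dest u; rewrite c0E => H1; subst; crunch. Qed.
Lemma rearr (s a b c : F) (u v o : O) :
  (a *: (a *: v + b *: u + c *: o) + b *: (s *: o) + c *: u) - a ^+ 2 *: v
  = (a*b + c) *: u + (a*c + b*s) *: o.
Proof. dest u; dest v; dest o; crunch. Qed.
Lemma c0_conj (x : O) : c0 (oconj x) = c0 x.
Proof. dest x; by rewrite conjE !c0E. Qed.
Lemma c0N (x : O) : c0 (- x) = - c0 x.
Proof. dest x; by rewrite oppE !c0E. Qed.
Lemma c0Z k (x : O) : c0 (k *: x) = k * c0 x.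
Proof. dest x; by rewrite scaleE !c0E. Qed.
Lemma c0D (x y : O) : c0 (x + y) = c0 x + c0 y.
Proof. dest x; dest y; by rewrite addE !c0E. Qed.
Lemma c0_one : c0 one = 1.
Proof. by rewrite oneE c0E. Qed.
End Coords.

Section Main.
Variable F : fieldType.
Variables alpha beta gamma : F.
Local Notation O := (Cayley F).
Local Notation om := (omul alpha beta gamma).
Local Notation one := (oone F).

Definition c0l (x : O) : F^o := c0 x.
Fact c0l_lin : linear c0l. Proof. by move=> k x y; rewrite /c0l c0D c0Z. Qed.
HB.instance Definition _ := GRing.isLinear.Build F O F^o *:%R c0l c0l_lin.
Definition Vim : {vspace O} := lker (linfun c0l).

Lemma memV x : (x \in Vim) = (c0 x == 0).
Proof. by rewrite memv_ker lfunE. Qed.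

Lemma c0_0 : c0 (0 : O) = 0.
Proof. by rewrite zeroE c0E. Qed.

Lemma one_notV : one \notin Vim.
Proof. by rewrite memV c0_one oner_eq0. Qed.

Lemma imP (two : 2%:R != 0 :> F) (x : O) : (oconj x == - x) = (c0 x == 0).
Proof.
apply/eqP/eqP => [h|/conj_im //].
have := congr1 (@c0 F) h; rewrite c0_conj c0N => /eqP; rewrite -subr_eq0 opprK.
rewrite -mulr2n -mulr_natr mulf_eq0 (negbTE two) orbF => /eqP //.
Qed.

Lemma dimO : \dim (fullv : {vspace O}) = 8%N.
Proof. by rewrite dimvf. Qed.

Lemma dimV : \dim Vim = 7%N.
Proof.
have := limg_ker_dim (linfun c0l) fullv; rewrite capfv dimO.
have -> : \dim (linfun c0l @: fullv) = 1%N.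
  apply/eqP; rewrite eqn_leq; apply/andP; split.
    by rewrite -[1%N](@dimvf _ F^o) dimvS // subvf.
  rewrite lt0n dimv_eq0; apply/eqP => h.
  have := memv_img (linfun c0l) (memvf one).
  by rewrite h memv0 lfunE; change (c0 one == 0 -> False); rewrite c0_one oner_eq0.
by move=> h; apply/eqP; rewrite -(eqn_add2r 1) h.
Qed.

Lemma span_lin (f : O -> O) (W : {vspace O}) (X : seq O) :
  (forall k x y, f (k *: x + y) = k *: f x + f y) ->
  (forall e, e \in X -> f e \in W) -> forall x, x \in <<X>>%VS -> f x \in W.
Proof.
move=> lin; have f0 : f 0 = 0.
  have := lin 1 0 0; rewrite !scale1r !addr0 => /(congr1 (fun t => t - f 0)).
  by rewrite addrK subrr => <-.
elim: X => [|e X IH] hX x.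
  by rewrite span_nil memv0 => /eqP ->; rewrite f0 mem0v.
rewrite span_cons => /memv_addP[y /vlineP[k ->] [z zX ->]].
rewrite lin; apply: memvD; first by apply: memvZ; apply: hX; exact: mem_head.
by apply: IH => // e' he'; apply: hX; rewrite inE he' orbT.
Qed.

Lemma prods (u v : O) : c0 u = 0 -> c0 v = 0 ->
  exists s t k p q : F, [/\ om u u = s *: one, om v v = t *: one,
    om v u = k *: one - om u v,
    om u (om u v) = s *: v &
    [/\ om (om u v) v = t *: u, om v (om u v) = k *: v - t *: u, om (om u v) u = k *: u - s *: v &
      om (om u v) (om u v) = p *: om u v + q *: one]].
Proof.
move=> hu hv; exists (c0 (om u u)), (c0 (om v v)), (c0 (om u v + om v u)),
  (c0 (om u v) + c0 (om u v)),
  (c0 (om (om u v) (om u v)) - (c0 (om u v) + c0 (om u v)) * c0 (om u v)).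
split; [exact: imsq hu | exact: imsq hv | exact: anti hu hv | exact: uw hu
       | split; [exact: wv hv | exact: vw hu hv | exact: wu hu hv | exact: quad]].
Qed.

Lemma A1l y z : A alpha beta gamma one y z = 0.
Proof. by rewrite /A !om1l subrr. Qed.
Lemma A1m x z : A alpha beta gamma x one z = 0.
Proof. by rewrite /A om1l om1r subrr. Qed.
Lemma A1r x y : A alpha beta gamma x y one = 0.
Proof. by rewrite /A !om1r subrr. Qed.
Lemma Aleft x y : A alpha beta gamma x x y = 0.
Proof. by rewrite /A leftalt subrr. Qed.
Lemma Aflex x y : A alpha beta gamma x y x = 0.
Proof. by rewrite /A flex subrr. Qed.
Lemma Aright x y : A alpha beta gamma y x x = 0.
Proof. by rewrite /A rightalt subrr. Qed.

Ltac memH := repeat match goal with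
 | |- is_true ((_ - _) \in _) => apply: memvB
 | |- is_true ((_ + _) \in _) => apply: memvD
 | |- is_true ((_ *: _) \in _) => apply: memvZ
 end; try done.

Section HH.
Variables u v : O.
Hypotheses (hu : c0 u = 0) (hv : c0 v = 0).
Local Notation X := [:: om u v; v; u; one].

Lemma H_closed x y : x \in <<X>>%VS -> y \in <<X>>%VS -> om x y \in <<X>>%VS.
Proof.
have inH : forall e, e \in X -> e \in <<X>>%VS by move=> e he; exact: memv_span.
have wH : om u v \in <<X>>%VS by apply: inH; rewrite !inE eqxx.
have vH : v \in <<X>>%VS by apply: inH; rewrite !inE eqxx !orbT.
have uH : u \in <<X>>%VS by apply: inH; rewrite !inE eqxx !orbT.
have oH : one \in <<X>>%VS by apply: inH; rewrite !inE eqxx !orbT.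
move=> xH yH.
apply: (@span_lin (fun x => om x y) _ _ _ _ _ xH) => [k a b|e he]; first by rewrite omulDl omulZl.
apply: (@span_lin (fun y => om e y) _ _ _ _ _ yH) => [k a b|e' he']; first by rewrite omulDr omulZr.
have [s [t [k [p [q [E1 E2 E3 E4 [E5 E6 E7 E8]]]]]]] := prods hu hv.
move: he he'; rewrite !inE => /or4P[] /eqP -> /or4P[] /eqP ->;
 rewrite ?om1l ?om1r ?E1 ?E2 ?E3 ?E4 ?E5 ?E6 ?E7 ?E8 //; memH.
Qed.

Lemma H_assoc x y z : x \in <<X>>%VS -> y \in <<X>>%VS -> z \in <<X>>%VS ->
  om (om x y) z = om x (om y z).
Proof.
move=> xH yH zH; apply/eqP; rewrite -subr_eq0 -memv0.
change (A alpha beta gamma x y z \in 0%VS).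
apply: (@span_lin (fun x => A alpha beta gamma x y z) _ _ _ _ _ xH) => [k a b|e1 h1]; first exact: Alin1.
apply: (@span_lin (fun y => A alpha beta gamma e1 y z) _ _ _ _ _ yH) => [k a b|e2 h2]; first exact: Alin2.
apply: (@span_lin (fun z => A alpha beta gamma e1 e2 z) _ _ _ _ _ zH) => [k a b|e3 h3]; first exact: Alin3.
rewrite memv0; apply/eqP.
move: h1 h2 h3; rewrite !inE => /or4P[]/eqP-> /or4P[]/eqP-> /or4P[]/eqP->.
- exact: (Aleft (om u v) (om u v)).
- exact: (Aleft (om u v) v).
- exact: (Aleft (om u v) u).
- exact: (A1r (om u v) (om u v)).
- exact: (Aflex (om u v) v).
- exact: (Aright v (om u v)).
- exact: (@as6 F alpha beta gamma u v).
- exact: (A1r (om u v) v).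
- exact: (Aflex (om u v) u).
- exact: (@as5 F alpha beta gamma u v).
- exact: (Aright u (om u v)).
- exact: (A1r (om u v) u).
- exact: (A1m (om u v) (om u v)).
- exact: (A1m (om u v) v).
- exact: (A1m (om u v) u).
- exact: (A1m (om u v) one).
- exact: (Aright (om u v) v).
- exact: (Aflex v (om u v)).
- exact: (@as4 F alpha beta gamma u v).
- exact: (A1r v (om u v)).
- exact: (Aleft v (om u v)).
- exact: (Aleft v v).
- exact: (Aleft v u).
- exact: (A1r v v).
- exact: (@as2 F alpha beta gamma u v).
- exact: (Aflex v u).
- exact: (Aright u v).
- exact: (A1r v u).
- exact: (A1m v (om u v)).
- exact: (A1m v v).
- exact: (A1m v u).
- exact: (A1m v one).
- exact: (Aright (om u v) u).
- exact: (@as3 F alpha beta gamma u v).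
- exact: (Aflex u (om u v)).
- exact: (A1r u (om u v)).
- exact: (@as1 F alpha beta gamma u v).
- exact: (Aright v u).
- exact: (Aflex u v).
- exact: (A1r u v).
- exact: (Aleft u (om u v)).
- exact: (Aleft u v).
- exact: (Aleft u u).
- exact: (A1r u u).
- exact: (A1m u (om u v)).
- exact: (A1m u v).
- exact: (A1m u u).
- exact: (A1m u one).
- exact: (A1l (om u v) (om u v)).
- exact: (A1l (om u v) v).
- exact: (A1l (om u v) u).
- exact: (A1l (om u v) one).
- exact: (A1l v (om u v)).
- exact: (A1l v v).
- exact: (A1l v u).
- exact: (A1l v one).
- exact: (A1l u (om u v)).
- exact: (A1l u v).
- exact: (A1l u u).
- exact: (A1l u one).
- exact: (A1l one (om u v)).
- exact: (A1l one v).
- exact: (A1l one u).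
- exact: (A1l one one).
Qed.

Lemma freeB (div : cayley_division alpha beta gamma) : free [:: v; u] -> free X.
Proof.
move=> fr; move: fr; rewrite free_cons => /andP[vNu]; rewrite seq1_free => u0.
rewrite span_seq1 in vNu.
have uN1 : u \notin <<[:: one]>>%VS.
  rewrite span_seq1; apply/vlineP => [[k ek]].
  have : c0 u = k by rewrite ek c0Z c0_one mulr1.
  by rewrite hu => k0; move: u0; rewrite ek -k0 scale0r eqxx.
have vNu1 : v \notin <<[:: u; one]>>%VS.
  apply/negP; rewrite span_cons span_seq1 => /memv_addP[y /vlineP[a ->] [z /vlineP[b ->] ev]].
  have : c0 v = b by rewrite ev c0D !c0Z hu c0_one mulr0 mulr1 add0r.
  rewrite hv => b0; move: vNu.
  by rewrite ev -b0 scale0r addr0 (memvZ _ (memv_line u)).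
have o0 : one != 0.
  by apply/eqP => h; have := @c0_one F; rewrite h c0_0 => /eqP; rewrite eq_sym oner_eq0.
rewrite !free_cons span_nil memv0 nil_free o0 uN1 vNu1 !andbT /=.
apply/negP; rewrite span_cons span_cons span_seq1.
move=> /memv_addP[y /vlineP[a ->] [z' /memv_addP[y2 /vlineP[b ->] [z /vlineP[c ->] ->]] ew]].
rewrite addrA in ew.
set s := c0 (om u u).
have e1 : om u (om u v) = s *: v := uw alpha beta gamma v hu.
have e2 : om u (om u v) = a *: (om u v) + b *: (s *: one) + c *: u.
  by rewrite {1}ew !omulDr !omulZr om1r (imsq alpha beta gamma hu).
have e3 : (s - a^+2) *: v = (a*b + c) *: u + (a*c + b*s) *: one.
  by rewrite scalerBl -e1 e2 ew rearr.
case: (eqVneq (s - a^+2) 0) => [sa|sa].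
  have sa' : s = a ^+ 2 by apply/eqP; rewrite -subr_eq0 sa.
  have : om (a *: one - u) (a *: one + u) = 0.
    by rewrite sqdiff (imsq alpha beta gamma hu) -/s sa' subrr.
  move/div => [/eqP|/eqP].
    rewrite subr_eq0 => /eqP h; move: uN1.
    by rewrite -h span_seq1 (memvZ _ (memv_line one)).
  rewrite addr_eq0 => /eqP h.
  have hu' : u = (- a) *: one by rewrite scaleNr h opprK.
  by move: uN1; rewrite hu' span_seq1 (memvZ _ (memv_line one)).
move: vNu1; rewrite -(scalerK sa v) e3 => /negP; apply; apply: memvZ.
apply: memvD; apply: memvZ; rewrite memv_span // !inE eqxx ?orbT //.
Qed.

End HH.

Lemma main_thm (two : 2%:R != 0 :> F) (div : cayley_division alpha beta gamma) :
  exists V : {vspace O},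
    [/\ is_im fullv V,
        \dim V = 7%N,
        (forall B : {vspace O},
            in_frakB alpha beta gamma B -> \dim B = 3%N) &
        (forall U : {vspace O}, (U <= V)%VS -> \dim U = 2%N ->
           exists! B : {vspace O},
             in_frakB alpha beta gamma B /\ (U <= B)%VS)].
Proof.
have memVim x : (x \in Vim) = (oconj x == - x) by rewrite memV imP.
have BHV : forall H B, is_im H B -> B = (H :&: Vim)%VS.
  by move=> H B hB; apply/vspaceP => x; rewrite hB memv_cap memVim.
exists Vim; split.
- by move=> x; rewrite memvf memVim.
- exact: dimV.
- move=> B [H [[oneH _] _ dH hB]]; rewrite (BHV _ _ hB).
  have := dimv_sum_cap H Vim; rewrite dH dimV.
  suff -> : \dim (H + Vim) = 8%N by move=> h; lia.
  apply/eqP; rewrite eqn_leq; apply/andP; split; first by rewrite -dimO dimvS // subvf.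
  have : (Vim == H + Vim)%VS = false.
    apply/negP => /eqP e; move: one_notV; rewrite e.
    by have := memv_add oneH (mem0v Vim); rewrite addr0 => ->.
  by rewrite eqEdim addvSr /= dimV => /negbT; rewrite -ltnNge.
- move=> U UV dU.
  have [v [u [defU fr]]] : exists v u, (<<[:: v; u]>> = U)%VS /\ free [:: v; u].
    move: (vbasisP U); case: (vbasis U) => s sz /= bU; move/eqP: sz; rewrite dU.
    case: s bU => [|v [|u [|? ?]]] // bU _.
    by exists v, u; split; [exact: span_basis bU | exact: basis_free bU].
  have uU : u \in U by rewrite -defU memv_span // !inE eqxx orbT.
  have vU : v \in U by rewrite -defU memv_span // !inE eqxx.
  have hu : c0 u = 0 by apply/eqP; rewrite -memV; exact: (subvP UV).
  have hv : c0 v = 0 by apply/eqP; rewrite -memV; exact: (subvP UV).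
  have dH : \dim <<[:: om u v; v; u; one]>>%VS = 4%N by apply/eqP; exact: freeB.
  set H := <<[:: om u v; v; u; one]>>%VS in dH *.
  have uH : u \in H by rewrite memv_span // !inE eqxx !orbT.
  have vH : v \in H by rewrite memv_span // !inE eqxx !orbT.
  exists (H :&: Vim)%VS; split.
    split.
      exists H; split => //.
      - split; first by rewrite memv_span // !inE eqxx !orbT.
        by move=> x y; exact: H_closed.
      - by move=> x y z; exact: H_assoc.
      - by move=> x; rewrite memv_cap memVim.
    rewrite -defU; apply/span_subvP => x; rewrite !inE => /orP[] /eqP ->;
      rewrite memv_cap ?uH ?vH; exact: (subvP UV).
  move=> B' [[H' [[oneH' mulH'] _ dH' hB']] UB'].
  have inH' : forall x, x \in U -> x \in H'.
    by move=> x /(subvP UB'); rewrite hB' => /andP[].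
  have sub : (H <= H')%VS.
    apply/span_subvP => x; rewrite !inE => /or4P[]/eqP-> //.
    - by apply: mulH'; apply: inH'.
    - exact: inH'.
    - exact: inH'.
  have eqH : H = H' by apply/eqP; rewrite eqEdim sub dH' dH.
  by rewrite (BHV _ _ hB') -eqH.
Qed.

End Main.

Theorem mainTheorem1 (F : fieldType) (alpha beta gamma : F) :
  (2%:R : F) != 0 ->
  alpha != 0 -> beta != 0 -> gamma != 0 ->
  cayley_division alpha beta gamma ->
  exists V : {vspace Cayley F},
    [/\ is_im fullv V,
        \dim V = 7%N,
        (forall B : {vspace Cayley F},
            in_frakB alpha beta gamma B -> \dim B = 3%N) &
        (forall U : {vspace Cayley F}, (U <= V)%VS -> \dim U = 2%N ->
           exists! B : {vspace Cayley F},
             in_frakB alpha beta gamma B /\ (U <= B)%VS)].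
Proof. by move=> two _ _ _ div; exact: main_thm two div. Qed.
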